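(* Let $A$ be a commutative unital ring, $d$ a derivation of $A$, and $B$ a commutative unital $A$-algebra which is finitely generated and free as an $A$-module. Let $\delta$ be a derivation of $B$ such that the structure map $A\to B$ is a differential homomorphism $(A,d)\to(B,\delta)$. Let $(D,\partial_D)$ be a differential $(B,\delta)$-algebra, i.e. $D$ is a $B$-algebra, $\partial_D$ a derivation of $D$, and the structure map $(B,\delta)\to(D,\partial_D)$ is differential. Let $W(D)$ be the classical Weil descent of $D$ from $B$ to $A$ with unit $W_D:D\to W(D)\otimes_A B$. Then there is a unique derivation $\partial_D^W$ on $W(D)$ such that $(W(D),\partial_D^W)$ is a differential $(A,d)$-algebra and $$W_D:(D,\partial_D)\to (W(D)\otimes_A B,\ \partial_D^W\otimes\delta)$$ is a differential $(B,\delta)$-algebra homomorphism, i.e. $W_D\circ\partial_D=(\partial_D^W\otimes\delta)\circ W_D$. Furthermore, $\partial_D^W$ only depends on $\partial_D$ and not on $\delta$: if $\delta'$ is another derivation of $B$ such that $(B,\delta')$ is a differential $(A,d)$-algebra and $(D,\partial_D)$ is a differential $(B,\delta')$-algebra, then the derivation of $W(D)$ obtained in the same way from $\delta'$ coincides with $\partial_D^W$.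
   Context: All rings and algebras are commutative and unital, homomorphisms unital. Classical Weil descent: for an $A$-algebra $B$ that is free of finite rank as an $A$-module, let $F$ be the functor from $A$-algebras to $B$-algebras, $C\mapsto C\otimes_A B$ (structure map $b\mapsto 1\otimes b$). For a $B$-algebra $D$ the Weil descent is an $A$-algebra $W(D)$ together with a $B$-algebra homomorphism $W_D:D\to W(D)\otimes_A B$ (the unit) such that for every $A$-algebra $C$ and every $B$-algebra homomorphism $f:D\to C\otimes_A B$ there is a unique $A$-algebra homomorphism $g:W(D)\to C$ with $(g\otimes \mathrm{id}_B)\circ W_D=f$; this determines $(W(D),W_D)$ up to unique isomorphism. If $(C,\partial_C)$ is a differential $(A,d)$-algebra (an $A$-algebra with a derivation such that $A\to C$ is a differential map $(A,d)\to(C,\partial_C)$), then $\partial_C\otimes\delta$ denotes the unique derivation on $C\otimes_A B$ such that the natural maps $C\to C\otimes_A B$ and $B\to C\otimes_A B$ are differential. *)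

(* Defs.v *)
From mathcomp Require Import all_boot all_algebra.
Set Implicit Arguments.
Unset Strict Implicit.
Unset Printing Implicit Defensive.
Import GRing.Theory.
Local Open Scope ring_scope.

(* Conventions: all rings are commutative unital rings (possibly zero:
   comPzRingType). An R-algebra is a ring S with a structure ring morphism
   R -> S, given explicitly. *)

Definition is_derivation (R : comPzRingType) (d : R -> R) : Prop :=
  (forall x y, d (x + y) = d x + d y) /\
  (forall x y, d (x * y) = d x * y + x * d y).

Definition diff_alg (R S : comPzRingType) (iS : R -> S) (dR : R -> R)
  (dS : S -> S) : Prop :=
  is_derivation dS /\ forall r, dS (iS r) = iS (dR r).

Definition is_basis (A B : comPzRingType) (iB : A -> B) (n : nat)
  (e : 'I_n -> B) (coord : B -> 'I_n -> A) : Prop :=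
  (forall b : B, b = \sum_(i < n) iB (coord b i) * e i) /\
  (forall x : 'I_n -> A, forall k, coord (\sum_(i < n) iB (x i) * e i) k = x k).

(* Model of C (x)_A B for B free with basis e: an element
   sum_i x_i (x) e_i is represented by x : 'I_n -> C. *)
Section Tensor.
Variables (A B C : comPzRingType) (n : nat) (e : 'I_n -> B)
  (coord : B -> 'I_n -> A) (iC : A -> C).

(* multiplication: e_i e_j = sum_k coord (e_i e_j) k e_k *)
Definition tmul (x y : 'I_n -> C) : 'I_n -> C :=
  fun k => \sum_(i < n) \sum_(j < n) x i * y j * iC (coord (e i * e j) k).

(* natural map B -> C (x) B, b |-> 1 (x) b  (its value at 1 is the unit) *)
Definition tembB (b : B) : 'I_n -> C := fun k => iC (coord b k).

(* g (x) id_B for g : C -> C' *)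
Definition tmap (C' : comPzRingType) (g : C -> C') (x : 'I_n -> C)
  : 'I_n -> C' := fun k => g (x k).

(* the derivation dC (x) delta on C (x)_A B :
   (dC (x) delta)(sum_i x_i (x) e_i)
     = sum_i dC x_i (x) e_i + sum_i x_i (x) delta(e_i) *)
Definition tder (dC : C -> C) (delta : B -> B) (x : 'I_n -> C) : 'I_n -> C :=
  fun k => dC (x k) + \sum_(i < n) x i * iC (coord (delta (e i)) k).

End Tensor.

Definition is_Balg_hom (A B C D : comPzRingType) (n : nat) (e : 'I_n -> B)
  (coord : B -> 'I_n -> A) (iC : A -> C) (iD : B -> D)
  (f : D -> 'I_n -> C) : Prop :=
  (forall x y k, f (x + y) k = f x k + f y k) /\
  (forall x y k, f (x * y) k = tmul e coord iC (f x) (f y) k) /\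
  (forall b k, f (iD b) k = tembB coord iC b k).

Definition is_Aalg_hom (A W C : comPzRingType) (iW : A -> W) (iC : A -> C)
  (g : W -> C) : Prop :=
  (forall x y, g (x + y) = g x + g y) /\
  (forall x y, g (x * y) = g x * g y) /\
  g 1 = 1 /\
  (forall a, g (iW a) = iC a).

Definition is_weil_descent (A B D W : comPzRingType) (n : nat)
  (e : 'I_n -> B) (coord : B -> 'I_n -> A) (iD : B -> D) (iW : A -> W)
  (WD : D -> 'I_n -> W) : Prop :=
  is_Balg_hom e coord iW iD WD /\
  forall (C : comPzRingType) (iC : {rmorphism A -> C}) (f : D -> 'I_n -> C),
    is_Balg_hom e coord iC iD f ->
    exists g : W -> C,
      (is_Aalg_hom iW iC g /\ forall x k, tmap g (WD x) k = f x k) /\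
      forall g' : W -> C,
        is_Aalg_hom iW iC g' -> (forall x k, tmap g' (WD x) k = f x k) ->
        forall w, g' w = g w.

Definition weil_derivation (A B D W : comPzRingType) (n : nat)
  (e : 'I_n -> B) (coord : B -> 'I_n -> A) (iW : A -> W) (d : A -> A)
  (delta : B -> B) (dD : D -> D) (WD : D -> 'I_n -> W) (dW : W -> W) : Prop :=
  diff_alg iW d dW /\
  forall x k, WD (dD x) k = tder e coord iW dW delta (WD x) k.

(* Main.v *)
From HB Require Import structures.
Require Import Defs.
From mathcomp Require Import all_boot all_algebra ring.
Set Implicit Arguments.
Unset Strict Implicit.
Import GRing.Theory.
Local Open Scope ring_scope.

Definition dual (R : comPzRingType) : Type := (R * R)%type.
HB.instance Definition _ (R : comPzRingType) := GRing.Zmodule.on (dual R).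

Section Dual.
Variable R : comPzRingType.
Definition dmul (x y : dual R) : dual R := (x.1 * y.1, x.1 * y.2 + x.2 * y.1).
Definition done : dual R := (1, 0).
Lemma dmulA : associative dmul.
Proof. move=> [a b] [c e] [f g]; rewrite /dmul /=; congr pair; ring. Qed.
Lemma dmulC : commutative dmul.
Proof. move=> [a b] [c e]; rewrite /dmul /=; congr pair; ring. Qed.
Lemma dmul1 : left_id done dmul.
Proof. move=> [a b]; rewrite /dmul /=; congr pair; ring. Qed.
Lemma dmulD : left_distributive dmul +%R.
Proof.
move=> [a b] [c e] [f g]; rewrite /dmul /=.
have -> : forall x y : R * R, x + y = (x.1 + y.1, x.2 + y.2) by [].
by rewrite /=; congr pair; ring.
Qed.
End Dual.
HB.instance Definition _ (R : comPzRingType) :=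
  GRing.Zmodule_isComPzRing.Build (dual R) (@dmulA R) (@dmulC R) (@dmul1 R) (@dmulD R).

Lemma dual_mulE (R : comPzRingType) (x y : dual R) : (x * y) = (x.1 * y.1, x.1 * y.2 + x.2 * y.1).
Proof. by []. Qed.
Lemma dual_addE (R : comPzRingType) (x y : dual R) : (x + y) = (x.1 + y.1, x.2 + y.2).
Proof. by []. Qed.

Lemma dual_sum1 (R : comPzRingType) (I : Type) (r : seq I) (P : pred I) (F : I -> dual R) :
  (\sum_(i <- r | P i) F i).1 = \sum_(i <- r | P i) (F i).1.
Proof. by apply: (big_morph (fun x : dual R => x.1)). Qed.
Lemma dual_sum2 (R : comPzRingType) (I : Type) (r : seq I) (P : pred I) (F : I -> dual R) :
  (\sum_(i <- r | P i) F i).2 = \sum_(i <- r | P i) (F i).2.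
Proof. by apply: (big_morph (fun x : dual R => x.2)). Qed.

Lemma der0 (R : comPzRingType) (d : R -> R) : is_derivation d -> d 0 = 0.
Proof. by case=> Ha _; apply: (addrI (d 0)); rewrite -Ha !addr0. Qed.
Lemma der1 (R : comPzRingType) (d : R -> R) : is_derivation d -> d 1 = 0.
Proof. by case=> _ Hm; have := Hm 1 1; rewrite !mulr1 mul1r => h; apply: (addrI (d 1)); rewrite -h addr0. Qed.
Lemma derB (R : comPzRingType) (d : R -> R) : is_derivation d -> forall x y, d (x - y) = d x - d y.
Proof.
move=> H x y; have [Ha _] := H.
have HN : d (- y) = - d y.
  by apply: (addrI (d y)); rewrite -Ha !subrr (der0 H).
by rewrite Ha HN.
Qed.

Section DMor.
Variables (A W : comPzRingType) (iW : {rmorphism A -> W}) (d : A -> A) (Hd : is_derivation d).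
Definition dmor of is_derivation d : A -> dual W := fun a => (iW a, iW (d a)).
Local Notation dm := (dmor Hd).
Lemma dmor_zmod : zmod_morphism dm.
Proof. move=> x y; rewrite /dmor (derB Hd) !rmorphB; by []. Qed.
Lemma dmor_monoid : monoid_morphism dm.
Proof.
split; first by rewrite /dmor (der1 Hd) rmorph1 rmorph0.
move=> x y; rewrite /dmor dual_mulE /= (proj2 Hd) rmorphM rmorphD !rmorphM.
by congr pair; ring.
Qed.
End DMor.
HB.instance Definition _ (A W : comPzRingType) (iW : {rmorphism A -> W}) (d : A -> A) (Hd : is_derivation d) := GRing.isZmodMorphism.Build A (dual W) (@dmor A W iW d Hd) (@dmor_zmod A W iW d Hd).
HB.instance Definition _ (A W : comPzRingType) (iW : {rmorphism A -> W}) (d : A -> A) (Hd : is_derivation d) := GRing.isMonoidMorphism.Build A (dual W) (@dmor A W iW d Hd) (@dmor_monoid A W iW d Hd).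

Section Basis.
Variables (A B : comPzRingType) (iB : {rmorphism A -> B}) (n : nat)
  (e : 'I_n -> B) (coord : B -> 'I_n -> A) (Hbasis : is_basis iB e coord).

Let E u : u = \sum_i iB (coord u i) * e i := (proj1 Hbasis u).
Let L (x : 'I_n -> A) k : coord (\sum_i iB (x i) * e i) k = x k := (proj2 Hbasis x k).

Lemma coord0 k : coord 0 k = 0.
Proof.
rewrite -(L (fun _ => 0) k); congr coord.
by rewrite big1 // => i _; rewrite rmorph0 mul0r.
Qed.

Lemma coordD u v k : coord (u + v) k = coord u k + coord v k.
Proof.
have -> : u + v = \sum_i iB (coord u i + coord v i) * e i.
  rewrite [in LHS](E u) [in LHS](E v) -big_split /=.
  by apply: eq_bigr => i _; rewrite rmorphD mulrDl.
exact: (L (fun i => coord u i + coord v i)).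
Qed.

Lemma coord_sum (I : Type) (r : seq I) (P : pred I) (F : I -> B) k :
  coord (\sum_(i <- r | P i) F i) k = \sum_(i <- r | P i) coord (F i) k.
Proof. exact: (big_morph (fun b => coord b k) (fun u v => coordD u v k) (coord0 k)). Qed.

Lemma coordZ a u k : coord (iB a * u) k = a * coord u k.
Proof.
rewrite [in LHS](E u) big_distrr /=.
have -> : \sum_i iB a * (iB (coord u i) * e i) = \sum_i iB (a * coord u i) * e i.
  by apply: eq_bigr => i _; rewrite mulrA rmorphM.
exact: (L (fun i => a * coord u i)).
Qed.

Lemma sum_dirac_r (R : comPzRingType) (F : 'I_n -> R) k :
  \sum_i F i * (i == k)%:R = F k.
Proof.
rewrite (bigD1 k) //= eqxx mulr1 big1 ?addr0 // => i /negbTE ->.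
by rewrite mulr0.
Qed.

Lemma sum_dirac_l (R : comPzRingType) (F : 'I_n -> R) k :
  \sum_i (k == i)%:R * F i = F k.
Proof.
rewrite -[RHS](sum_dirac_r F k); apply: eq_bigr => i _.
by rewrite mulrC eq_sym.
Qed.

Lemma coord_e j k : coord (e j) k = (j == k)%:R.
Proof.
have -> : e j = \sum_i iB ((i == j)%:R) * e i.
  rewrite (bigD1 j) //= eqxx rmorph1 mul1r big1 ?addr0 // => i /negbTE ->.
  by rewrite rmorph0 mul0r.
by rewrite L eq_sym.
Qed.

Lemma coord_mul u v k :
  coord (u * v) k = \sum_i \sum_j coord u i * coord v j * coord (e i * e j) k.
Proof.
rewrite [in LHS](E u) [in LHS](E v) big_distrl coord_sum /=.
apply: eq_bigr => i _; rewrite big_distrr coord_sum /=.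
apply: eq_bigr => j _.
have -> : iB (coord u i) * e i * (iB (coord v j) * e j) =
   iB (coord u i * coord v j) * (e i * e j) by rewrite rmorphM; ring.
by rewrite coordZ.
Qed.

Variables (d : A -> A) (Hd : is_derivation d) (delta : B -> B)
  (Hdelta : diff_alg iB d delta).

Lemma delta_coord u k : coord (delta u) k =
  d (coord u k) + \sum_i coord u i * coord (delta (e i)) k.
Proof.
have [[Ha Hm] Hc] := Hdelta.
rewrite [in LHS](E u).
rewrite (big_morph delta Ha (der0 (proj1 Hdelta))) coord_sum.
under eq_bigr do rewrite Hm Hc coordD coordZ coordZ coord_e.
by rewrite big_split /= sum_dirac_r.
Qed.

Lemma key a b k :
  \sum_i coord (e a * e b) i * coord (delta (e i)) k =
  \sum_l coord (delta (e a)) l * coord (e l * e b) k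
  + \sum_l coord (delta (e b)) l * coord (e a * e l) k
  - d (coord (e a * e b) k).
Proof.
have h1 := delta_coord (e a * e b) k.
have h2 : coord (delta (e a * e b)) k =
  \sum_l coord (delta (e a)) l * coord (e l * e b) k
  + \sum_l coord (delta (e b)) l * coord (e a * e l) k.
  rewrite (proj2 (proj1 Hdelta)) coordD !coord_mul; congr (_ + _).
    apply: eq_bigr => i _; under eq_bigr do rewrite coord_e -mulrA mulrCA.
    by rewrite sum_dirac_l.
  under eq_bigr do rewrite coord_e.
  rewrite exchange_big /=; apply: eq_bigr => j _.
  under eq_bigr do rewrite -mulrA.
  by rewrite sum_dirac_l.
by rewrite -h2 h1 addrC addKr.
Qed.

End Basis.

Lemma dual_ext (R : comPzRingType) (p q : dual R) : p.1 = q.1 -> p.2 = q.2 -> p = q.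
Proof. by case: p q => ? ? [? ?] /= -> ->. Qed.

Lemma alg_id (R : comPzRingType) n (X Y : 'I_n -> R) (M : 'I_n -> 'I_n -> 'I_n -> R)
  (Cc : 'I_n -> 'I_n -> R) (dM : 'I_n -> 'I_n -> R) k
  (key : forall a b, \sum_i M a b i * Cc i k =
     \sum_l Cc a l * M l b k + \sum_l Cc b l * M a l k - dM a b) :
  \sum_i (\sum_a \sum_b X a * Y b * M a b i) * Cc i k =
  \sum_a \sum_b (\sum_l X l * Cc l a) * Y b * M a b k
  + \sum_a \sum_b X a * (\sum_l Y l * Cc l b) * M a b k
  - \sum_a \sum_b X a * Y b * dM a b.
Proof.
have -> : \sum_i (\sum_a \sum_b X a * Y b * M a b i) * Cc i k =
   \sum_a \sum_b X a * Y b * (\sum_i M a b i * Cc i k).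
  under eq_bigr do rewrite big_distrl /=; rewrite exchange_big /=.
  apply: eq_bigr => a _; under eq_bigr do rewrite big_distrl /=.
  rewrite exchange_big /=; apply: eq_bigr => b _; rewrite big_distrr /=.
  by apply: eq_bigr => i _; rewrite mulrA.
under eq_bigr do under eq_bigr do rewrite key !mulrBr mulrDr.
under eq_bigr do rewrite sumrB big_split /=.
rewrite sumrB big_split /=; congr (_ + _ - _).
  -
    under [RHS]eq_bigr do under eq_bigr do rewrite big_distrl /= big_distrl /=.
    symmetry.
    under [LHS]eq_bigr do rewrite exchange_big /=.
    rewrite [LHS]exchange_big /=.
    under [LHS]eq_bigr do rewrite exchange_big /=.
    apply: eq_bigr => a _; apply: eq_bigr => b _.
    rewrite big_distrr /=; apply: eq_bigr => l _; ring.
  -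
    apply: eq_bigr => a _.
    under [RHS]eq_bigr do rewrite mulr_sumr big_distrl /=.
    under eq_bigr do rewrite big_distrr /=.
    rewrite exchange_big /=.
    apply: eq_bigr => b _; apply: eq_bigr => l _; ring.

Qed.
Lemma alg_id2 (R : comPzRingType) n (X Y P Q : 'I_n -> R) (M : 'I_n -> 'I_n -> 'I_n -> R)
  (Cc : 'I_n -> 'I_n -> R) (dM : 'I_n -> 'I_n -> R) k
  (key : forall a b, \sum_i M a b i * Cc i k =
     \sum_l Cc a l * M l b k + \sum_l Cc b l * M a l k - dM a b) :
  \sum_i \sum_j P i * Y j * M i j k + \sum_i \sum_j X i * Q j * M i j k
  - \sum_i (\sum_a \sum_b X a * Y b * M a b i) * Cc i k =
  \sum_i \sum_j (X i * Y j * dM i j + (X i * (Q j - \sum_l Y l * Cc l j)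
     + (P i - \sum_l X l * Cc l i) * Y j) * M i j k).
Proof.
rewrite (alg_id X Y key).
have -> : \sum_i \sum_j (X i * Y j * dM i j + (X i * (Q j - \sum_l Y l * Cc l j)
     + (P i - \sum_l X l * Cc l i) * Y j) * M i j k) =
  \sum_i \sum_j ((P i * Y j * M i j k + X i * Q j * M i j k) -
    ((\sum_l X l * Cc l i) * Y j * M i j k + X i * (\sum_l Y l * Cc l j) * M i j k
     - X i * Y j * dM i j)).
  by apply: eq_bigr => i _; apply: eq_bigr => j _; ring.
under [RHS]eq_bigr do rewrite !(sumrB, big_split) /=.
by rewrite !(sumrB, big_split) /=.
Qed.
Section Weil.
Variables (A : comPzRingType) (d : A -> A) (Hd : is_derivation d)
  (B : comPzRingType) (iB : {rmorphism A -> B}) (n : nat) (e : 'I_n -> B)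
  (coord : B -> 'I_n -> A) (Hbasis : is_basis iB e coord)
  (D : comPzRingType) (iD : {rmorphism B -> D}) (dD : D -> D)
  (W : comPzRingType) (iW : {rmorphism A -> W}) (WD : D -> 'I_n -> W)
  (HW : is_weil_descent e coord iD iW WD).

Section Delta.
Variables (delta : B -> B) (Hdelta : diff_alg iB d delta) (HD : diff_alg iD delta dD).

Definition fD (x : D) (k : 'I_n) : dual W :=
  (WD x k, WD (dD x) k - \sum_i WD x i * iW (coord (delta (e i)) k)).

Lemma fD_hom : is_Balg_hom e coord (dmor iW Hd) iD fD.
Proof.
have [[WDa [WDm WDu]] _] := HW.
have [[dDa dDm] dDc] := HD.
split; [|split].
- move=> x y k; rewrite /fD dual_addE /=; apply: dual_ext => /=; first exact: WDa.
  rewrite dDa WDa; under eq_bigr do rewrite WDa mulrDl.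
  by rewrite big_split /= opprD addrACA.
- move=> x y k; apply: dual_ext.
  + rewrite /tmul dual_sum1 /=; under eq_bigr do rewrite dual_sum1.
    under eq_bigr do under eq_bigr do rewrite !dual_mulE /=.
    by rewrite WDm.
  + rewrite /tmul dual_sum2 /=.
    under [RHS]eq_bigr do rewrite dual_sum2.
    under [RHS]eq_bigr do under eq_bigr do rewrite !dual_mulE /=.
    rewrite dDm WDa !WDm /tmul.
    under [X in _ - X]eq_bigr do rewrite WDm /tmul.
    rewrite /dmor /=.
    apply: (@alg_id2 W n (WD x) (WD y) (WD (dD x)) (WD (dD y))
      (fun a b i => iW (coord (e a * e b) i)) (fun i l => iW (coord (delta (e i)) l))
      (fun a b => iW (d (coord (e a * e b) k))) k).
    move=> a b; under eq_bigr do rewrite -rmorphM.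
    rewrite -rmorph_sum (key Hbasis Hdelta a b k) rmorphB rmorphD !rmorph_sum.
    by congr (_ + _ - _); apply: eq_bigr => l _; rewrite rmorphM.
- move=> b k; apply: dual_ext => /=; rewrite /tembB /dmor /=; first exact: WDu.
  rewrite dDc WDu; under eq_bigr do rewrite WDu.
rewrite /tembB.   rewrite (delta_coord Hbasis Hdelta) rmorphD rmorph_sum.
  rewrite -addrA [X in _ + X](_ : _ = 0) ?addr0 //; apply/eqP; rewrite subr_eq0; apply/eqP.
  by apply: eq_bigr => i _; rewrite rmorphM.
Qed.

Lemma main_delta : exists dW : W -> W,
  weil_derivation e coord iW d delta dD WD dW /\
  forall dW', weil_derivation e coord iW d delta dD WD dW' -> forall w, dW' w = dW w.
Proof.
have [g [[[ga [gm [g1 gi]]] gf] guniq]] := proj2 HW _ (dmor iW Hd) fD fD_hom.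
have [g0 [_ g0u]] := proj2 HW W iW WD (proj1 HW).
have gid : forall w, (g w).1 = w.
  have h1 : is_Aalg_hom iW iW (fun w => (g w).1).
    split; [|split; [|split]].
    - by move=> x y; rewrite ga dual_addE.
    - by move=> x y; rewrite gm dual_mulE.
    - by rewrite g1.
    - by move=> a; rewrite gi.
  have h2 : forall x k, tmap (fun w => (g w).1) (WD x) k = WD x k.
    by move=> x k; have := gf x k; rewrite /tmap => ->.
  have h3 : is_Aalg_hom iW iW id by split; [|split; [|split]].
  move=> w; rewrite (g0u _ h1 h2) -(g0u _ h3) //.
exists (fun w => (g w).2); split.
- split; first split; first split.
  + by move=> x y; rewrite ga dual_addE.
  + by move=> x y; rewrite gm dual_mulE /= !gid addrC.
  + by move=> a; rewrite gi.
  + by move=> x k; rewrite /tder; have := gf x k; rewrite /tmap => ->; rewrite /fD /= subrK.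
- move=> dW' [[[da dm] di] dWD] w.
  pose g' := fun w => ((w, dW' w) : dual W).
  have H1 : is_Aalg_hom iW (dmor iW Hd) g'.
    split; [|split; [|split]].
    - by move=> x y; rewrite /g' da dual_addE.
    - by move=> x y; rewrite /g' dual_mulE /= dm addrC.
    - by apply: dual_ext => //=; apply: der1.
    - by move=> a; rewrite /g' di.
  have H2 : forall x k, tmap g' (WD x) k = fD x k.
    by move=> x k; rewrite /tmap /g' /fD dWD /tder addrK.
  exact: (congr1 snd (guniq g' H1 H2 w)).
Qed.

End Delta.
End Weil.

Theorem theorem3p2
  (A : comPzRingType) (d : A -> A) (Hd : is_derivation d)
  (B : comPzRingType) (iB : {rmorphism A -> B})
  (n : nat) (e : 'I_n -> B) (coord : B -> 'I_n -> A)
  (Hbasis : is_basis iB e coord)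
  (delta : B -> B) (Hdelta : diff_alg iB d delta)
  (D : comPzRingType) (iD : {rmorphism B -> D})
  (dD : D -> D) (HD : diff_alg iD delta dD)
  (W : comPzRingType) (iW : {rmorphism A -> W}) (WD : D -> 'I_n -> W)
  (HW : is_weil_descent e coord iD iW WD) :
  (exists dW : W -> W,
     weil_derivation e coord iW d delta dD WD dW /\
     forall dW' : W -> W,
       weil_derivation e coord iW d delta dD WD dW' -> forall w, dW' w = dW w)
  /\
  (forall delta' : B -> B, diff_alg iB d delta' -> diff_alg iD delta' dD ->
     forall dW dW' : W -> W,
       weil_derivation e coord iW d delta dD WD dW ->
       weil_derivation e coord iW d delta' dD WD dW' ->
       forall w, dW w = dW' w).
Proof.
split; first exact: (main_delta Hd Hbasis HW Hdelta HD).
move=> delta' Hdelta' HD' dW dW' Hw Hw'.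
have [dW0 [_ U]] := main_delta Hd Hbasis HW Hdelta' HD'.
have Hw2 : weil_derivation e coord iW d delta' dD WD dW.
  split; first exact: (proj1 Hw).
  move=> x k; rewrite (proj2 Hw) /tder; congr (_ + _); apply: eq_bigr => i _; congr (_ * _).
  have [[_ [_ WDu]] _] := HW.
  rewrite -[iW (coord (delta (e i)) k)]/(tembB coord iW (delta (e i)) k).
  by rewrite -WDu -(proj2 HD) (proj2 HD') WDu.
by move=> w; rewrite (U _ Hw2) (U _ Hw').
Qed.
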